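(* Assume Assumption 1, Assumption 2 and the null hypothesis $H_0:\ T_i(1)=T_i(0)$ for all $i$, and condition on $\boldsymbol{T}(1),\boldsymbol{T}(0)$. Then for each $1\le k\le K$, $$D_k\sim\mathrm{Bin}(d_k,g_k),\qquad N_{1k}\sim\mathrm{Bin}(n_k,g_k\phi_k),\qquad N_k\sim\mathrm{Bin}(n_k,g_k).$$
   Context: There are $n$ units. Unit $i$ has potential event times $T_i(1),T_i(0)\ge 0$, potential censoring times $C_i(1),C_i(0)\in[0,\infty]$, and treatment indicator $Z_i\in\{0,1\}$; bold letters denote $n$-vectors. Assumption 1: conditional on $\boldsymbol{T}(1),\boldsymbol{T}(0),\boldsymbol{C}(1),\boldsymbol{C}(0)$, the $Z_i$ are i.i.d. Bernoulli$(p_1)$, $p_1=1-p_0\in(0,1)$. Assumption 2: $(\boldsymbol{C}(1),\boldsymbol{C}(0))$ is independent of $(\boldsymbol{T}(1),\boldsymbol{T}(0))$ and the pairs $(C_i(1),C_i(0))$ are i.i.d. across $i$. $G_z(c)=\Pr(C_i(z)\ge c)$, $G(t)=p_1G_1(t)+p_0G_0(t)$. Realized: $W_i=\min\{T_i,C_i\}$, $\Delta_i=\mathbb{1}(T_i\le C_i)$ with $T_i=Z_iT_i(1)+(1-Z_i)T_i(0)$, $C_i=Z_iC_i(1)+(1-Z_i)C_i(0)$. Let $t_1<\dots<t_K$ be the distinct values of $\{T_i(0)\}$, $d_k=\#\{i:T_i(0)=t_k\}$, $n_k=\#\{i:T_i(0)\ge t_k\}$, $g_k=G(t_k)$, $\phi_k=p_1G_1(t_k)/G(t_k)$;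 $N_{1k}=\sum_iZ_i\mathbb{1}(W_i\ge t_k)$, $N_k=\sum_i\mathbb{1}(W_i\ge t_k)$, $D_k=\sum_i\Delta_i\mathbb{1}(W_i=t_k)$. $\mathrm{Bin}(m,p)$ denotes the binomial distribution. *)

(* Defs.v *)
From HB Require Import structures.
From mathcomp Require Import all_boot all_order all_algebra.
From mathcomp Require Import all_classical all_reals all_analysis.
From mathcomp Require Import measurable_realfun.
Set Implicit Arguments. Unset Strict Implicit. Unset Printing Implicit Defensive.
Import Order.TTheory GRing.Theory Num.Theory.
Local Open Scope classical_set_scope.
Local Open Scope ring_scope.

Section Survival.
Context {R : realType} {n : nat} {Omega : Type}.

Definition obsT (T1 T0 : 'I_n -> R) (Z : 'I_n -> Omega -> bool) i w : R :=
  if Z i w then T1 i else T0 i.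
Definition obsC (C1 C0 : 'I_n -> Omega -> \bar R) (Z : 'I_n -> Omega -> bool)
  i w : \bar R := if Z i w then C1 i w else C0 i w.
Definition obsW T1 T0 C1 C0 Z i w : \bar R :=
  Order.min (obsT T1 T0 Z i w)%:E (obsC C1 C0 Z i w).
Definition obsDelta T1 T0 C1 C0 Z i w : bool :=
  ((obsT T1 T0 Z i w)%:E <= obsC C1 C0 Z i w)%E.

Definition distinct_times (T0 : 'I_n -> R) : seq R :=
  sort <=%R (undup [seq T0 i | i <- enum 'I_n]).
Definition d_at (T0 : 'I_n -> R) (t : R) : nat := #|[set i | T0 i == t]|.
Definition n_at (T0 : 'I_n -> R) (t : R) : nat := #|[set i | t <= T0 i]|.

Definition cntD T1 T0 C1 C0 Z (t : R) w : nat :=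
  (\sum_(i < n) (obsDelta T1 T0 C1 C0 Z i w && (obsW T1 T0 C1 C0 Z i w == t%:E)))%N.
Definition cntN1 T1 T0 C1 C0 Z (t : R) w : nat :=
  (\sum_(i < n) (Z i w && (t%:E <= obsW T1 T0 C1 C0 Z i w)%E))%N.
Definition cntN T1 T0 C1 C0 Z (t : R) w : nat :=
  (\sum_(i < n) (t%:E <= obsW T1 T0 C1 C0 Z i w)%E)%N.

End Survival.

Section Assumptions.
Context {R : realType} {n : nat} {d : measure_display} {Omega : measurableType d}.
Variable P : probability Omega R.

(* Assumption 1 (given the fixed T's): conditional on (C(1), C(0)), the Z_i
   are i.i.d. Bernoulli(p1); expressed through the joint law on the
   generating pi-system of measurable rectangles. *)
Definition assumption1 (Z : 'I_n -> Omega -> bool)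
  (C1 C0 : 'I_n -> Omega -> \bar R) (p1 : R) : Prop :=
  forall (s : 'I_n -> bool) (A1 A0 : 'I_n -> set (\bar R)),
    (forall i, measurable (A1 i) /\ measurable (A0 i)) ->
    P [set w | forall i, Z i w = s i /\ A1 i (C1 i w) /\ A0 i (C0 i w)] =
    ((\prod_(i < n) (if s i then p1 else 1 - p1))%:E *
     P [set w | forall i, A1 i (C1 i w) /\ A0 i (C0 i w)])%E.

Definition assumption2 (C1 C0 : 'I_n -> Omega -> \bar R) : Prop :=
  (forall (A1 A0 : 'I_n -> set (\bar R)),
    (forall i, measurable (A1 i) /\ measurable (A0 i)) ->
    P [set w | forall i, A1 i (C1 i w) /\ A0 i (C0 i w)] =
    (\prod_(i < n) P [set w | A1 i (C1 i w) /\ A0 i (C0 i w)])%E) /\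
  (forall (A1 A0 : set (\bar R)) (i j : 'I_n),
    measurable A1 -> measurable A0 ->
    P [set w | A1 (C1 i w) /\ A0 (C0 i w)] =
    P [set w | A1 (C1 j w) /\ A0 (C0 j w)]).

End Assumptions.

(* Main.v *)
Require Import Defs.
From HB Require Import structures.
From mathcomp Require Import all_boot all_order all_algebra.
From mathcomp Require Import all_classical all_reals all_analysis.
From mathcomp Require Import measurable_realfun.
From mathcomp Require Import ring lra.
Set Implicit Arguments. Unset Strict Implicit. Unset Printing Implicit Defensive.
Import Order.TTheory GRing.Theory Num.Theory.
Local Open Scope classical_set_scope.
Local Open Scope ring_scope.

Section H.
Context {R : realType} {n : nat} {d : measure_display} {Omega : measurableType d}.
Variable P : probability Omega R.

Lemma L1 (T : finType) (V : Omega -> T) (A : pred T) :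
  (forall v, measurable [set w | V w = v]) ->
  P [set w | A (V w)] = (\sum_(v | A v) P [set w | V w = v])%E.
Proof.
move=> mV.
have -> : [set w | A (V w)] = \bigcup_(v in [set v | A v]) [set w | V w = v].
  by apply/seteqP; split => w /=; [move=> Aw; exists (V w) | move=> [v Av Vw]; rewrite Vw].
have tr : trivIset [set v | A v] (fun v => [set w | V w = v]).
  by move=> u v _ _ [w [/= Hu Hv]]; rewrite -Hu -Hv.
rewrite measure_fin_bigcup //; last first.
all: try (by move=> v _; apply: mV).
all: try (exact: finite_finset).
rewrite (fsbigE (enum [pred v | A v])) ?enum_uniq //.
- rewrite big_enum_cond /=; apply: eq_bigl => v.
  rewrite inE; case Av: (A v) => /=; [exact: mem_set | done].
- by move=> v /=; rewrite mem_enum.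
- by move=> v Av; rewrite mem_enum inE Av.
Qed.

Lemma mfinI (F : 'I_n -> set Omega) : (forall i, measurable (F i)) ->
  measurable [set w | forall i, F i w].
Proof.
move=> mF.
have -> : [set w | forall i, F i w] = \bigcap_(i in setT) F i.
  by apply/seteqP; split => w /= H i //; apply: H.
by apply: fin_bigcap_measurable => //; exact: finite_finset.
Qed.

Lemma mge (t : R) (b : bool) : measurable [set c : \bar R | (t%:E <= c)%E = b].
Proof.
have m1 : measurable [set c : \bar R | (t%:E <= c)%E].
  have := emeasurable_itv `[t%:E, +oo[; congr measurable.
  by apply/seteqP; split => x /=; rewrite in_itv /= andbT.
case: b => //.
have := measurableC m1; congr measurable.
by apply/seteqP; split => x /=; case: (_ <= _)%E.
Qed.

Lemma splitB (A : set Omega) (f : Omega -> bool) : measurable A ->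
  measurable [set w | f w] ->
  (P (A `&` [set w | f w = true]) + P (A `&` [set w | f w = false]) = P A)%E.
Proof.
move=> mA mf.
rewrite -measureU //; first last.
- by apply/seteqP; split => w //= [[_ ->] [_]].
- by apply: measurableI => //; have := measurableC mf; congr measurable;
    apply/seteqP; split => w /=; case: (f w).
- exact: measurableI.
congr (P _); apply/seteqP; split => w /=; first by case => -[].
by move=> Aw; case: (f w); [left | right].
Qed.

Lemma sum8 (V : nmodType) (F : bool * bool * bool -> V) :
  \sum_u F u = \sum_(a : bool) \sum_(b : bool) \sum_(c : bool) F (a, b, c).
Proof.
rewrite pair_bigA pair_bigA; apply: eq_bigr => [[[a b] c]] _ //.
Qed.

Lemma minlemma (a t : R) (c : \bar R) :
  ((a%:E <= c)%E && (Order.min a%:E c == t%:E)) = (a == t) && (t%:E <= c)%E.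
Proof.
case: (leP a%:E c) => h /=.
  by rewrite eqe; case: eqP => // e; subst a; rewrite h.
by case: eqP => // e; subst a; rewrite leNgt h.
Qed.


End H.

Lemma L3 (R : comNzRingType) (I U : finType) (rho : I -> U -> R) (h : I -> U -> bool)
  (S : {set I}) (q : R) (j : nat) :
  (forall i, \sum_u rho i u = 1) ->
  (forall i, i \in S -> \sum_(u | h i u) rho i u = q) ->
  (forall i u, i \notin S -> h i u = false) ->
  \sum_(y : {ffun I -> U} | (\sum_i h i (y i) == j)%N) \prod_i rho i (y i)
  = q ^+ j * (1 - q) ^+ (#|S| - j) *+ 'C(#|S|, j).
Proof.
move=> H1 Hq Hh.
pose F i u : {poly R} := (rho i u)%:P * 'X^(h i u).
have E1 : \prod_i \sum_u F i u = ((1 - q)%:P + q%:P * 'X) ^+ #|S|.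
  rewrite (bigID (fun i => i \in S)) /=.
  rewrite [X in _ * X]big1 ?mulr1; last first.
    move=> i iS; rewrite /F; under eq_bigr do rewrite Hh // expr0 mulr1.
    by rewrite -rmorph_sum H1.
  rewrite -prodr_const; apply: eq_bigr => i iS.
  rewrite (bigID (fun u => h i u)) /= /F.
  under eq_bigr => u hu do rewrite hu expr1.
  under [X in _ + X]eq_bigr => u hu do rewrite (negbTE hu) expr0 mulr1.
  rewrite -big_distrl /= -!rmorph_sum Hq // addrC.
  congr (_%:P + _).
  by rewrite -(H1 i) [in RHS](bigID (fun u => h i u)) /= Hq // [q + _]addrC addrK.
have E2 : \prod_i \sum_u F i u = \sum_(y : {ffun I -> U})
     (\prod_i rho i (y i))%:P * 'X^(\sum_i h i (y i)).
  rewrite bigA_distr_bigA; apply: eq_bigr => y _.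
  by rewrite /F big_split /= prodrXr rmorph_prod.
have := congr1 (fun p : {poly R} => p`_j) (etrans (esym E1) E2).
rewrite /= coef_sum exprDn coef_sum.
under [in X in _ = X -> _]eq_bigr do rewrite coefCM coefXn.

move=> E; rewrite big_mkcond /=.
transitivity (\sum_(y : {ffun I -> U}) \prod_i rho i (y i) * (j == (\sum_i h i (y i))%N)%:R).
  by apply: eq_bigr => y _; rewrite eq_sym; case: eqP => _; rewrite ?mulr1 ?mulr0.
rewrite -E.
under eq_bigr => i _ do rewrite exprMn mulrA -!rmorphXn -polyCM coefMn coefCM coefXn.
case: (ltnP j (#|S|).+1) => hj.
  rewrite (bigD1 (Ordinal hj)) //= eqxx mulr1 big1 ?addr0.
    by rewrite [_ * q ^+ j]mulrC.
  by move=> i /eqP ne; case: eqP => e; [case: ne; apply: val_inj | rewrite mulr0 mul0rn].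
rewrite bin_small // mulr0n big1 // => i _.
by case: eqP => e; [move: (ltn_ord i); rewrite -e ltnNge hj | rewrite mulr0 mul0rn].
Qed.


Unset Implicit Arguments.
Set Strict Implicit.

Theorem lemmaA4 (R : realType) (n : nat) (d : measure_display)
  (Omega : measurableType d) (P : probability Omega R)
  (T1 T0 : 'I_n -> R) (C1 C0 : 'I_n -> Omega -> \bar R)
  (Z : 'I_n -> Omega -> bool) (p1 : R) (G1 G0 : R -> R) :
  0 < p1 < 1 ->
  (forall i, 0 <= T1 i /\ 0 <= T0 i) ->
  (forall i w, (0 <= C1 i w)%E /\ (0 <= C0 i w)%E) ->
  (forall i, measurable [set w | Z i w]) ->
  (forall i, measurable_fun setT (C1 i) /\ measurable_fun setT (C0 i)) ->
  assumption1 P Z C1 C0 p1 ->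
  assumption2 P C1 C0 ->
  (* G_z(c) = Pr(C_i(z) >= c) *)
  (forall i c, P [set w | (c%:E <= C1 i w)%E] = (G1 c)%:E) ->
  (forall i c, P [set w | (c%:E <= C0 i w)%E] = (G0 c)%:E) ->
  (* null hypothesis H0 *)
  (forall i, T1 i = T0 i) ->
  let G := fun t => p1 * G1 t + (1 - p1) * G0 t in
  let ts := distinct_times T0 in
  forall k : nat, (k < size ts)%N ->
    let tk := nth 0 ts k in
    let gk := G tk in
    let phik := p1 * G1 tk / G tk in
    (forall j : nat, P [set w | cntD T1 T0 C1 C0 Z tk w = j] =
                     (binomial_pmf (d_at T0 tk) gk j)%:E) /\
    (forall j : nat, P [set w | cntN1 T1 T0 C1 C0 Z tk w = j] =
                     (binomial_pmf (n_at T0 tk) (gk * phik) j)%:E) /\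
    (forall j : nat, P [set w | cntN T1 T0 C1 C0 Z tk w = j] =
                     (binomial_pmf (n_at T0 tk) gk j)%:E).
Proof.
move=> /andP[p1gt0 p1lt1] hT hC hZ hCm hA1 hA2 hG1 hG0 H0 G ts k hk tk gk phik.
pose e1 i w := (tk%:E <= C1 i w)%E.
pose e0 i w := (tk%:E <= C0 i w)%E.
pose Y w : {ffun 'I_n -> bool * bool * bool} := [ffun i => (Z i w, e1 i w, e0 i w)].
pose r (b : bool) := if b then p1 else 1 - p1.
pose pi i c1 c0 := fine (P [set w | e1 i w = c1 /\ e0 i w = c0]).
pose rho i (u : bool * bool * bool) := r u.1.1 * pi i u.1.2 u.2.
have mE1 : forall i b, measurable [set w | e1 i w = b].
  by move=> i b; have := (hCm i).1 measurableT _ (mge tk b); rewrite setTI.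
have mE0 : forall i b, measurable [set w | e0 i w = b].
  by move=> i b; have := (hCm i).2 measurableT _ (mge tk b); rewrite setTI.
have mZb : forall i b, measurable [set w | Z i w = b].
  move=> i [|]; first exact: hZ.
  have := measurableC (hZ i); congr measurable.
  by apply/seteqP; split => w /=; case: (Z i w).
have mpi : forall i c1 c0, measurable [set w | e1 i w = c1 /\ e0 i w = c0].
  by move=> i c1 c0; have H := measurableI _ _ (mE1 i c1) (mE0 i c0); exact H.
have eqY : forall y, [set w | Y w = y] =
    [set w | forall i, Z i w = (y i).1.1 /\ e1 i w = (y i).1.2 /\ e0 i w = (y i).2].
  move=> y; apply/seteqP; split => w /=.
    by move=> <- i; rewrite ffunE.
  move=> H; apply/ffunP => i; rewrite ffunE; case: (H i) => -> [-> ->].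
  by case: (y i) => [[? ?] ?].
have mY : forall y, measurable [set w | Y w = y].
  move=> y; rewrite eqY; apply: mfinI => i.
  have H := measurableI _ _ (mZb i (y i).1.1) (measurableI _ _ (mE1 i (y i).1.2) (mE0 i (y i).2)); exact H.
have pmf : forall y, P [set w | Y w = y] = (\prod_i rho i (y i))%:E.
  move=> y.
  have := hA1 (fun i => (y i).1.1) (fun i => [set c | (tk%:E <= c)%E = (y i).1.2])
    (fun i => [set c | (tk%:E <= c)%E = (y i).2]) (fun i => conj (mge _ _) (mge _ _)).
  rewrite (hA2.1 _ _ (fun i => conj (mge _ _) (mge _ _))) => E.
  etransitivity; first by rewrite eqY; exact: E.
  rewrite (eq_bigr (fun i => (pi i (y i).1.2 (y i).2)%:E)); last first.
    by move=> i _; rewrite /pi fineK //; exact: fin_num_measure (mpi i _ _).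
  by rewrite prodEFin -EFinM /rho big_split.
have fin : forall A, measurable A -> P A \is a fin_num.
  by move=> A mA; exact: fin_num_measure.
have M1 : forall i c1, pi i c1 true + pi i c1 false = fine (P [set w | e1 i w = c1]).
  move=> i c1; apply: EFin_inj; rewrite EFinD /pi !fineK; try exact: fin.
  by rewrite -(splitB P (mE1 i c1) (mE0 i true)).
have M0 : forall i c0, pi i true c0 + pi i false c0 = fine (P [set w | e0 i w = c0]).
  move=> i c0; apply: EFin_inj; rewrite EFinD /pi !fineK; try exact: fin.
  rewrite -(splitB P (mE0 i c0) (mE1 i true)).
  by rewrite ![[set w | e0 i w = c0] `&` _]setIC.
have Q1t : forall i, fine (P [set w | e1 i w = true]) = G1 tk.
  by move=> i; have := hG1 i tk; rewrite /e1 => ->.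
have Q0t : forall i, fine (P [set w | e0 i w = true]) = G0 tk.
  by move=> i; have := hG0 i tk; rewrite /e0 => ->.
have Q1f : forall i, fine (P [set w | e1 i w = false]) = 1 - G1 tk.
  move=> i; rewrite -(Q1t i); apply: EFin_inj; rewrite EFinB !fineK; try exact: fin.
  rewrite -(probability_setT P) -(splitB P measurableT (mE1 i true)) !setTI.
  by rewrite addeAC subee ?add0e //; exact: fin.
have Hsum1 : forall i, \sum_u rho i u = 1.
  move=> i; rewrite sum8 !big_bool /rho /r /=.
  have a := M1 i true; have b := M1 i false; rewrite Q1t in a; rewrite Q1f in b.
  have a' : pi i true false = G1 tk - pi i true true by lra.
  have b' : pi i false false = 1 - G1 tk - pi i false true by lra.
  rewrite a' b'; ring.
have HqD : forall i, \sum_(u | if u.1.1 then u.1.2 else u.2) rho i u = gk.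
  move=> i; rewrite big_mkcond sum8 !big_bool /rho /r /=.
  have a := M1 i true; have b := M0 i true; rewrite Q1t in a; rewrite Q0t in b.
  have a' : pi i true false = G1 tk - pi i true true by lra.
  have b' : pi i false true = G0 tk - pi i true true by lra.
  rewrite a' b' /gk /G; ring.
have Hq1 : forall i, \sum_(u | u.1.1 && u.1.2) rho i u = p1 * G1 tk.
  move=> i; rewrite big_mkcond sum8 !big_bool /rho /r /=.
  have a := M1 i true; rewrite Q1t in a.
  have a' : pi i true false = G1 tk - pi i true true by lra.
  rewrite a'; ring.
have cntE : forall (h : 'I_n -> bool * bool * bool -> bool) j,
    P [set w | (\sum_i h i (Y w i))%N = j] =
    (\sum_(y : {ffun 'I_n -> bool * bool * bool} | (\sum_i h i (y i) == j)%N)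
        \prod_i rho i (y i))%:E.
  move=> h j.
  rewrite (_ : [set w | _ = j] = [set w | (fun y : {ffun 'I_n -> bool * bool * bool} => (\sum_i h i (y i) == j)%N) (Y w)]); last first.
    by apply/seteqP; split => w /= /eqP.
  rewrite (L1 P (fun y : {ffun 'I_n -> bool * bool * bool} => (\sum_i h i (y i) == j)%N) mY).
  by under eq_bigr do rewrite pmf; rewrite sumEFin.
have binE : forall (S : {set 'I_n}) (h : 'I_n -> bool * bool * bool -> bool) (q : R) j,
    (forall i, i \in S -> \sum_(u | h i u) rho i u = q) ->
    (forall i u, i \notin S -> h i u = false) ->
    P [set w | (\sum_i h i (Y w i))%N = j] = (binomial_pmf #|S| q j)%:E.
  move=> S h q j Hq Hh; rewrite cntE /binomial_pmf; congr (_%:E).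
  exact: L3.
have cardE : forall (p : pred 'I_n), #|[set i | p i]| = #|[set i | p i]%SET|.
  move=> p; apply: eq_card => i; rewrite [in RHS]inE.
  by apply/idP/idP => [/set_mem //|pi0]; exact: mem_set.
split; [|split].
- move=> j.
  pose h i (u : bool * bool * bool) := (T0 i == tk) && (if u.1.1 then u.1.2 else u.2).
  rewrite (_ : [set w | _ = j] = [set w | (\sum_i h i (Y w i))%N = j]); last first.
    apply/seteqP; split => w /=; rewrite /cntD;
    (have -> // : forall w, (\sum_(i < n) (obsDelta T1 T0 C1 C0 Z i w && (obsW T1 T0 C1 C0 Z i w == tk%:E)))%N = (\sum_i h i (Y w i))%N);
    move=> w'; apply: eq_bigr => i _; congr (nat_of_bool _);
    rewrite ffunE /h /= /obsDelta /obsW /obsT H0 if_same minlemma /obsC /e1 /e0;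
    by case: (Z i w').
  rewrite /d_at (cardE (fun i => T0 i == tk)); apply: (binE [set i | T0 i == tk]%SET) => [i|i u].
    by rewrite inE => iS; rewrite -(HqD i); apply: eq_bigl => u; rewrite /h iS.
  by rewrite inE /h => /negbTE ->.
- move=> j.
  pose h i (u : bool * bool * bool) := (tk <= T0 i) && (u.1.1 && u.1.2).
  rewrite (_ : [set w | _ = j] = [set w | (\sum_i h i (Y w i))%N = j]); last first.
    apply/seteqP; split => w /=; rewrite /cntN1;
    (have -> // : forall w, (\sum_(i < n) (Z i w && (tk%:E <= obsW T1 T0 C1 C0 Z i w)%E))%N = (\sum_i h i (Y w i))%N);
    move=> w'; apply: eq_bigr => i _; congr (nat_of_bool _);
    rewrite ffunE /h /= /obsW /obsT H0 if_same le_min lee_fin /obsC /e1 /e0;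
    by case: (Z i w'); rewrite /= ?andbF.
  rewrite /n_at (cardE (fun i => tk <= T0 i)); apply: (binE [set i | tk <= T0 i]%SET) => [i|i u].
    rewrite inE => iS; rewrite (eq_bigl (fun u : bool * bool * bool => u.1.1 && u.1.2)); last first.
      by move=> u; rewrite /h iS.
    rewrite Hq1.
    have G1ge0 : 0 <= G1 tk by rewrite -lee_fin -(hG1 i tk).
    have G0ge0 : 0 <= G0 tk by rewrite -lee_fin -(hG0 i tk).
    rewrite /phik /gk; case: (eqVneq (G tk) 0) => Gz.
      rewrite Gz invr0 mulr0 mul0r.
      have : 0 <= p1 * G1 tk by apply: mulr_ge0 => //; exact: ltW.
      have : 0 <= (1 - p1) * G0 tk by apply: mulr_ge0 => //; rewrite subr_ge0; exact: ltW.
      move: Gz; rewrite /G; lra.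
    by rewrite [RHS]mulrC divfK.
  by rewrite inE /h => /negbTE ->.
- move=> j.
  pose h i (u : bool * bool * bool) := (tk <= T0 i) && (if u.1.1 then u.1.2 else u.2).
  rewrite (_ : [set w | _ = j] = [set w | (\sum_i h i (Y w i))%N = j]); last first.
    apply/seteqP; split => w /=; rewrite /cntN;
    (have -> // : forall w, (\sum_(i < n) (tk%:E <= obsW T1 T0 C1 C0 Z i w)%E)%N = (\sum_i h i (Y w i))%N);
    move=> w'; apply: eq_bigr => i _; congr (nat_of_bool _);
    rewrite ffunE /h /= /obsW /obsT H0 if_same le_min lee_fin /obsC /e1 /e0;
    by case: (Z i w').
  rewrite /n_at (cardE (fun i => tk <= T0 i)); apply: (binE [set i | tk <= T0 i]%SET) => [i|i u].
    by rewrite inE => iS; rewrite -(HqD i); apply: eq_bigl => u; rewrite /h iS.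
  by rewrite inE /h => /negbTE ->.
Qed.
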